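(* Let $\kappa_1,\kappa_2$ be real constants, let $\delta\neq 0$ be a real constant, let $F$ be a smooth real function of one variable and let $G$ be any antiderivative of $F$ (i.e. $G'=F$). Consider the system $$\sigma_r+\frac{\kappa_1\sigma}{r}=\delta\,u_{tt},\qquad u_r+\frac{\kappa_2 u}{r}=\frac{1}{\delta}F(\sigma)$$ for smooth functions $\sigma(r,t)$, $u(r,t)$ with $r>0$. Then every smooth solution $(\sigma,u)$ satisfies the three conservation laws $$\partial_r\big(r^{\kappa_1}\sigma\big)+\partial_t\big(-\delta r^{\kappa_1}u_t\big)=0,$$ $$\partial_r\big(r^{\kappa_1}t\sigma\big)+\partial_t\big(\delta r^{\kappa_1}(u-tu_t)\big)=0,$$ $$\partial_r\big(r^{\kappa_1+\kappa_2}u\,\sigma_t\big)+\partial_t\Big(r^{\kappa_1+\kappa_2}\Big(\tfrac{\delta}{2}\big(u_t^2-2uu_{tt}\big)-\tfrac{1}{\delta}G(\sigma)\Big)\Big)=0.$$ These correspond to the multipliers $(\Lambda^1,\Lambda^2)=(r^{\kappa_1},0)$, $(tr^{\kappa_1},0)$ and $(-r^{\kappa_1+\kappa_2}u_t,\ r^{\kappa_1+\kappa_2}\sigma_t)$, respectively, for the equations $\sigma_r+\kappa_1\sigma/r-\delta u_{tt}=0$, $u_r+\kappa_2u/r-F(\sigma)/\delta=0$.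
   Context: Subscripts denote partial derivatives. The system models shear waves in cylindrical geometry, with $\sigma$ the stress and $u$ the displacement and with constitutive relation (strain) $=F(\sigma)$. *)

(* Defs.v *)
From Stdlib Require Import Reals List.
From Coquelicot Require Import Coquelicot.
Open Scope R_scope.

(* Partial derivative of a two-variable function f(r,t):
   d = true : with respect to r ; d = false : with respect to t. *)
Definition pd (d : bool) (f : R -> R -> R) : R -> R -> R :=
  fun r t => if d then Derive (fun x => f x t) r else Derive (fun y => f r y) t.

Definition d_r (f : R -> R -> R) := pd true f.
Definition d_t (f : R -> R -> R) := pd false f.

Fixpoint pd_iter (l : list bool) (f : R -> R -> R) : R -> R -> R :=
  match l with
  | nil => f
  | d :: l' => pd d (pd_iter l' f)
  end.

Definition smooth_half_plane (f : R -> R -> R) : Prop :=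
  forall (l : list bool) (r t : R), 0 < r ->
    ex_derive (fun x => pd_iter l f x t) r /\
    ex_derive (fun y => pd_iter l f r y) t /\
    continuous (fun p : R * R => pd_iter l f (fst p) (snd p)) (r, t).

Definition smooth1 (f : R -> R) : Prop :=
  forall (n : nat) (x : R), ex_derive (Derive_n f n) x.

(* Main.v *)
Require Import Defs.
From Coquelicot Require Import Coquelicot.
From Stdlib Require Import Reals Lra List.
Open Scope R_scope.

Lemma HP k r : 0 < r -> is_derive (fun x => Rpower x k) r (k * Rpower r k / r).
Proof.
intros Hr. apply is_derive_Reals.
replace (k * Rpower r k / r) with (k * Rpower r (k - 1)).
apply derivable_pt_lim_power; auto.
replace (Rpower r k) with (Rpower r (k-1) * Rpower r 1).
rewrite Rpower_1 by auto. field. lra.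
rewrite <- Rpower_plus. f_equal. ring.
Qed.
Section S.
Variable f : R -> R -> R.
Hypothesis Hf : smooth_half_plane f.
Lemma exr l r t : 0 < r -> ex_derive (fun x => pd_iter l f x t) r.
Proof. intros H; exact (proj1 (Hf l r t H)). Qed.
Lemma ext l r t : 0 < r -> ex_derive (fun y => pd_iter l f r y) t.
Proof. intros H; exact (proj1 (proj2 (Hf l r t H))). Qed.
Lemma mixed r t : 0 < r ->
  Derive (fun z => Derive (fun y => f z y) t) r = Derive (fun z => Derive (fun x => f x z) r) t.
Proof.
intros Hr. apply Schwarz.
- exists (mkposreal r Hr). intros u v Hu Hv. simpl in Hu.
  assert (0 < u) by (apply Rabs_def2 in Hu; lra).
  split; [|split; [|split]].
  + exact (exr nil u v H).
  + exact (ext nil u v H).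
  + exact (exr (false::nil) u v H).
  + exact (ext (true::nil) u v H).
- apply continuity_2d_pt_filterlim. exact (proj2 (proj2 (Hf (true::false::nil) r t Hr))).
- apply continuity_2d_pt_filterlim. exact (proj2 (proj2 (Hf (false::true::nil) r t Hr))).
Qed.
End S.
Lemma DP k r : 0 < r -> Derive (fun x : R => Rpower x k) r = k * Rpower r k / r.
Proof. intros Hr; apply is_derive_unique, HP, Hr. Qed.
Ltac exd sigma u Hs Hu r Hr :=
  first
  [ exact (ext sigma Hs nil r _ Hr) | exact (ext u Hu nil r _ Hr)
  | exact (ext sigma Hs (false::nil) r _ Hr) | exact (ext u Hu (false::nil) r _ Hr)
  | exact (ext sigma Hs (true::nil) r _ Hr) | exact (ext u Hu (true::nil) r _ Hr)
  | exact (ext u Hu (false::false::nil) r _ Hr)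
  | exact (exr sigma Hs nil _ _ Hr) | exact (exr u Hu nil _ _ Hr)
  | exact (exr sigma Hs (false::nil) _ _ Hr) | exact (exr u Hu (false::nil) _ _ Hr) ].

Ltac exds sigma u Hs Hu r Hr :=
  repeat match goal with |- _ /\ _ => split | |- True => exact I end;
  try exd sigma u Hs Hu r Hr.

Theorem mainTheorem1
  (k1 k2 delta : R) (F G : R -> R) (sigma u : R -> R -> R) :
  delta <> 0 ->
  smooth1 F ->
  (forall x, is_derive G x (F x)) ->
  smooth_half_plane sigma ->
  smooth_half_plane u ->
  (forall r t, 0 < r ->
     d_r sigma r t + k1 * sigma r t / r = delta * d_t (d_t u) r t) ->
  (forall r t, 0 < r ->
     d_r u r t + k2 * u r t / r = / delta * F (sigma r t)) ->
  forall r t, 0 < r ->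
    d_r (fun r t => Rpower r k1 * sigma r t) r t
      + d_t (fun r t => - delta * Rpower r k1 * d_t u r t) r t = 0
    /\
    d_r (fun r t => Rpower r k1 * t * sigma r t) r t
      + d_t (fun r t => delta * Rpower r k1 * (u r t - t * d_t u r t)) r t = 0
    /\
    d_r (fun r t => Rpower r (k1 + k2) * u r t * d_t sigma r t) r t
      + d_t (fun r t => Rpower r (k1 + k2) *
               (delta / 2 * ((d_t u r t) ^ 2 - 2 * u r t * d_t (d_t u) r t)
                - / delta * G (sigma r t))) r t = 0.
Proof.
intros Hd _ HG Hs Hu Heq1 Heq2 r t Hr.
unfold d_r, d_t, pd in *. cbv beta iota in *.
pose proof (Heq1 r t Hr) as E1. pose proof (Heq2 r t Hr) as E2.
split; [|split].
- rewrite Derive_mult; [| eexists; apply (HP k1 r Hr) | exd sigma u Hs Hu r Hr].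
  rewrite (DP k1 r Hr).
  erewrite (is_derive_unique (fun y => _) t); [| auto_derive; [exds sigma u Hs Hu r Hr | reflexivity]].
  set (utt := Derive (fun y => Derive (fun y0 => u r y0) y) t) in *.
  set (sr := Derive (fun x => sigma x t) r) in *.
  assert (sr = delta*utt - k1*sigma r t / r) as -> by lra.
  field; lra.
- rewrite (Derive_ext (fun x => Rpower x k1 * t * sigma x t) (fun x => t * (Rpower x k1 * sigma x t))) by (intros; ring).
  rewrite Derive_scal, Derive_mult; [| eexists; apply (HP k1 r Hr) | exd sigma u Hs Hu r Hr].
  rewrite (DP k1 r Hr).
  erewrite (is_derive_unique (fun y => _) t); [| auto_derive; [exds sigma u Hs Hu r Hr | reflexivity]].
  set (utt := Derive (fun y => Derive (fun y0 => u r y0) y) t) in *.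
  set (sr := Derive (fun x => sigma x t) r) in *.
  assert (sr = delta*utt - k1*sigma r t / r) as -> by lra.
  field; lra.
- rewrite Derive_mult; [| | exd sigma u Hs Hu r Hr].
  2:{ apply ex_derive_mult; [eexists; apply (HP (k1+k2) r Hr) | exd sigma u Hs Hu r Hr]. }
  rewrite Derive_mult; [| eexists; apply (HP (k1+k2) r Hr) | exd sigma u Hs Hu r Hr].
  rewrite (DP (k1+k2) r Hr).
  rewrite (mixed sigma Hs r t Hr).
  erewrite (is_derive_unique (fun y => _) t); [| auto_derive; [exds sigma u Hs Hu r Hr; eexists; apply HG | reflexivity]].
  pose proof (Derive_ext _ _ t (fun y => Heq1 r y Hr)) as E1t.
  rewrite Derive_scal in E1t.
  erewrite (is_derive_unique (fun y => Rpower r (k1 + k2) * _) t); [| auto_derive; [exds sigma u Hs Hu r Hr | reflexivity]].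
  2:{ eexists; apply HG. }
  rewrite Derive_plus in E1t; [| exd sigma u Hs Hu r Hr | ].
  2:{ auto_derive. exds sigma u Hs Hu r Hr. }
  erewrite (is_derive_unique (fun y => k1 * _ / r) t) in E1t; [| auto_derive; [exds sigma u Hs Hu r Hr | reflexivity]].
  rewrite (is_derive_unique (fun x : R => G x) (sigma r t) _ (HG _)).
  set (uttt := Derive (fun x => Derive (fun y => Derive (fun y0 => u r y0) y) x) t) in *.
  assert (Eu : Derive (Derive (fun y => Derive (fun y0 => u r y0) y)) t = uttt) by reflexivity.
  try rewrite Eu in E1t.
  set (srt := Derive (fun x => Derive (fun x0 => sigma x0 x) r) t) in *.
  set (st := Derive (fun x => sigma r x) t) in *.
  set (ur := Derive (fun x => u x t) r) in *.
  set (ut := Derive (fun x => u r x) t) in *.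
  set (utt := Derive (fun y => Derive (fun y0 => u r y0) y) t) in *.
  assert (HF: F (sigma r t) = delta * (ur + k2 * u r t / r)) by (rewrite E2; field; auto).
  rewrite HF.
  assert (srt = delta*uttt - k1*st/r) as -> by lra.
  field; lra.
Qed.
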